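(* Let $\phi:\mathbb{R}^n\to\mathbb{R}\cup\{+\infty\}$ be $m_\phi$-weakly convex (possibly nonsmooth) and let $g:\mathbb{R}^n\to\mathbb{R}\cup\{+\infty\}$ be proper, closed and convex; set $\Psi:=\phi-g$. For $0<\mu<1/m_\phi$ define $\Psi_\mu(\bm z):=\mathcal{M}_{\mu\phi}(\bm z)-\mathcal{M}_{\mu g}(\bm z)$, which is continuously differentiable. Let $\varepsilon>0$ and $0<\mu<1/m_\phi$. If $\bar{\bm z}\in\mathbb{R}^n$ satisfies $\|\nabla\Psi_\mu(\bar{\bm z})\|\le\min\{1,\mu^{-1}\}\varepsilon$, then $\bar{\bm x}:=\mathrm{prox}_{\mu\phi}(\bar{\bm z})$ is an $\varepsilon$-critical point of $\Psi$ with auxiliary point $\bar{\bm y}:=\mathrm{prox}_{\mu g}(\bar{\bm z})$, i.e. there exists $\bar{\bm u}\in\partial\phi(\bar{\bm x})-\partial g(\bar{\bm y})$ with $\max\{\|\bar{\bm u}\|,\|\bar{\bm x}-\bar{\bm y}\|\}\le\varepsilon$.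
   Context: A function $\phi$ is $m_\phi$-weakly convex if $\phi+\frac{m_\phi}{2}\|\cdot\|^2$ is convex. For a function $\varphi$ and $\mu>0$, the Moreau envelope and proximal mapping are $\mathcal{M}_{\mu\varphi}(\bm z):=\min_{\bm x}\{\varphi(\bm x)+\frac{1}{2\mu}\|\bm x-\bm z\|^2\}$ and $\mathrm{prox}_{\mu\varphi}(\bm z):=\arg\min_{\bm x}\{\varphi(\bm x)+\frac{1}{2\mu}\|\bm x-\bm z\|^2\}$ (well-defined and single-valued for $\mu\in(0,1/m_\phi)$ in the weakly convex case). $\partial$ denotes the general (limiting) subdifferential, which coincides with the convex subdifferential for convex functions. A point $\bar{\bm x}$ is an $\varepsilon$-critical point of $\Psi=\phi-g$ if there exist $\bar{\bm y}\in\mathbb{R}^n$ and $\bar{\bm u}\in\partial\phi(\bar{\bm x})-\partial g(\bar{\bm y})$ with $\max\{\|\bar{\bm u}\|,\|\bar{\bm x}-\bar{\bm y}\|\}\le\varepsilon$. Norms are Euclidean. *)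

(* Defs.v *)
From HB Require Import structures.
From mathcomp Require Import all_boot all_order all_algebra.
From mathcomp Require Import all_classical all_reals.
From mathcomp Require Import ereal.
Set Implicit Arguments. Unset Strict Implicit. Unset Printing Implicit Defensive.
Import Order.TTheory GRing.Theory Num.Theory.
Local Open Scope ring_scope.
Local Open Scope classical_set_scope.

Section Defs.
Variables (R : realType) (n : nat).
Notation V := 'rV[R]_n.

Definition dot (u v : V) : R := \sum_(i < n) u 0 i * v 0 i.
Definition enorm (u : V) : R := Num.sqrt (dot u u).

Definition proper_fun (f : V -> \bar R) : Prop :=
  (forall x, f x != -oo%E) /\ (exists x, f x < +oo)%E.

(* convexity of an extended-real valued function (convention 0 * (+oo) = 0) *)
Definition convex_fun (f : V -> \bar R) : Prop :=
  forall (x y : V) (t : R), 0 <= t -> t <= 1 ->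
    (f (t *: x + (1 - t) *: y)%R <= t%:E * f x + (1 - t)%:E * f y)%E.

Definition weakly_convex (m : R) (f : V -> \bar R) : Prop :=
  convex_fun (fun x => f x + ((m / 2) * enorm x ^+ 2)%:E)%E.

Definition lsc_fun (f : V -> \bar R) : Prop :=
  forall (x : V) (a : R), (a%:E < f x)%E ->
    exists2 d : R, 0 < d & forall y, enorm (y - x) < d -> (a%:E < f y)%E.

Definition moreau (f : V -> \bar R) (mu : R) (z : V) : \bar R :=
  ereal_inf [set (f x + ((2 * mu)^-1 * enorm (x - z) ^+ 2)%:E)%E | x in setT].

Definition is_prox (f : V -> \bar R) (mu : R) (z x : V) : Prop :=
  forall y : V, (f x + ((2 * mu)^-1 * enorm (x - z) ^+ 2)%:E
                 <= f y + ((2 * mu)^-1 * enorm (y - z) ^+ 2)%:E)%E.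

(* Psi_mu = M_{mu phi} - M_{mu g} (both envelopes are finite under the hypotheses) *)
Definition psi_mu (phi g : V -> \bar R) (mu : R) (z : V) : R :=
  fine (moreau phi mu z) - fine (moreau g mu z).

Definition has_gradient (F : V -> R) (z d : V) : Prop :=
  forall eps : R, 0 < eps -> exists2 del : R, 0 < del &
    forall w : V, enorm (w - z) < del ->
      `|F w - F z - dot d (w - z)| <= eps * enorm (w - z).

Definition reg_subdiff (f : V -> \bar R) (x u : V) : Prop :=
  f x \is a fin_num /\
  forall eps : R, 0 < eps -> exists2 del : R, 0 < del &
    forall y : V, enorm (y - x) < del ->
      ((fine (f x) + dot u (y - x) - eps * enorm (y - x))%:E <= f y)%E.

Definition vcvg (s : nat -> V) (x : V) : Prop :=
  forall eps : R, 0 < eps -> exists N : nat, forall k, (N <= k)%N -> enorm (s k - x) < eps.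
Definition rcvg (s : nat -> R) (a : R) : Prop :=
  forall eps : R, 0 < eps -> exists N : nat, forall k, (N <= k)%N -> `|s k - a| < eps.

Definition lim_subdiff (f : V -> \bar R) (x u : V) : Prop :=
  f x \is a fin_num /\
  exists (xs us : nat -> V),
    [/\ vcvg xs x, vcvg us u,
        rcvg (fun k => fine (f (xs k))) (fine (f x)) &
        forall k, reg_subdiff f (xs k) (us k)].

End Defs.

(* Main.v *)
Require Import Defs.
From HB Require Import structures.
From mathcomp Require Import all_boot all_order all_algebra.
From mathcomp Require Import all_classical all_reals.
From mathcomp Require Import ereal.
From mathcomp Require Import ring lra.
Import Order.TTheory GRing.Theory Num.Theory.
Set Implicit Arguments. Unset Strict Implicit.
Local Open Scope ring_scope.

Section Helpers.
Variables (R : realType) (n : nat).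
Notation V := 'rV[R]_n.
Implicit Types (u v w : V) (k : R).

Lemma dotC u v : dot u v = dot v u.
Proof. by apply: eq_bigr => i _; rewrite mulrC. Qed.

Lemma dotDl u v w : dot (u + v) w = dot u w + dot v w.
Proof. by rewrite /dot -big_split; apply: eq_bigr => i _; rewrite mxE mulrDl. Qed.

Lemma dotZl k u v : dot (k *: u) v = k * dot u v.
Proof. by rewrite /dot mulr_sumr; apply: eq_bigr => i _; rewrite mxE mulrA. Qed.

Lemma dotNl u v : dot (- u) v = - dot u v.
Proof. by rewrite -scaleN1r dotZl mulN1r. Qed.

Lemma dotBl u v w : dot (u - v) w = dot u w - dot v w.
Proof. by rewrite dotDl dotNl. Qed.

Lemma dotDr u v w : dot w (u + v) = dot w u + dot w v.
Proof. by rewrite dotC dotDl !(dotC w). Qed.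

Lemma dotZr k u v : dot v (k *: u) = k * dot v u.
Proof. by rewrite dotC dotZl dotC. Qed.

Lemma dotNr u v : dot v (- u) = - dot v u.
Proof. by rewrite dotC dotNl dotC. Qed.

Lemma dotBr u v w : dot w (u - v) = dot w u - dot w v.
Proof. by rewrite dotDr dotNr. Qed.

Lemma dot_ge0 u : 0 <= dot u u.
Proof. by apply: sumr_ge0 => i _; rewrite -expr2 sqr_ge0. Qed.

Lemma dot_eq0 u : dot u u = 0 -> u = 0.
Proof.
move=> /eqP; rewrite psumr_eq0; last by move=> i _; rewrite -expr2 sqr_ge0.
move=> /allP H; apply/matrixP => i j; rewrite ord1 mxE.
have := H j (mem_index_enum j); rewrite /= mulf_eq0 orbb => /eqP //.
Qed.

Lemma enorm_ge0 u : 0 <= enorm u.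
Proof. exact: sqrtr_ge0. Qed.

Lemma enorm_sq u : enorm u ^+ 2 = dot u u.
Proof. by rewrite sqr_sqrtr // dot_ge0. Qed.

Lemma enormZ k u : enorm (k *: u) = `|k| * enorm u.
Proof.
by rewrite /enorm dotZl dotZr mulrA -expr2 sqrtrM ?sqr_ge0 // sqrtr_sqr.
Qed.

Lemma enorm0 : enorm (0 : V) = 0.
Proof. by rewrite -(scale0r (0 : V)) enormZ normr0 mul0r. Qed.

End Helpers.
Section M.
Variables (R : realType) (n : nat).
Notation V := 'rV[R]_n.
Implicit Types (u v w x y z : V) (k : R) (f : V -> \bar R).

Lemma dotDD u v : dot (u + v) (u + v) = dot u u + 2 * dot u v + dot v v.
Proof. rewrite dotDl !dotDr ?(dotC v u); ring. Qed.

Lemma lee_sub_fin (Y : \bar R) (r s : R) : Y != -oo%E ->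
  (r%:E <= Y + s%:E)%E -> ((r - s)%:E <= Y)%E.
Proof.
case: Y => [y||] //= _; last by move=> _; rewrite leey.
by rewrite -EFinD !lee_fin => H; lra.
Qed.

Lemma prox_fin f mu z x : proper_fun f -> is_prox f mu z x -> f x \is a fin_num.
Proof.
move=> [Hn [x0 Hx0]] /(_ x0); rewrite fin_numE Hn /=.
move: Hx0; case: (f x0) => [r0||] //= _; case: (f x) => //.
Qed.

Lemma reg_sub_prox f mu z x : 0 < mu -> proper_fun f -> is_prox f mu z x ->
  reg_subdiff f x (mu^-1 *: (z - x)).
Proof.
move=> mu0 pf px; have fx := prox_fin pf px.
split => // e e0.
exists (e * (2 * mu)); first by rewrite mulr_gt0 // mulr_gt0.
move=> y hy.
have := px y; rewrite -(fineK fx) -EFinD => /(lee_sub_fin (proj1 pf y)).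
apply: le_trans; rewrite lee_fin.
set h := y - x.
have -> : y - z = h + (x - z) by rewrite /h addrA subrK.
rewrite !enorm_sq (dotDD h) /=.
have -> : z - x = - (x - z) by rewrite opprB.
rewrite dotZl dotNl (dotC (x - z)).
have en0 := enorm_ge0 h.
have hq : dot h h = enorm h ^+ 2 by rewrite enorm_sq.

set c := (2 * mu)^-1.
have hc : mu^-1 = 2 * c by rewrite /c invfM mulrA divff ?mul1r // pnatr_eq0.
have c0 : 0 < c by rewrite invr_gt0 mulr_gt0.
have hc2 : c * (e * (2 * mu)) = e by rewrite mulrCA /c mulVf ?mulr1 // mulf_neq0 ?pnatr_eq0 ?gt_eqF.
have : c * enorm h <= e by rewrite -hc2 ler_pM2l // ltW.
rewrite hc hq; move: (dot h (x - z)) (dot (x - z) (x - z)) => s N0.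
move: (fine (f x)) (enorm h) en0 => fx' en en0 H.
nra.
Qed.

Lemma lim_of_reg f x u : reg_subdiff f x u -> lim_subdiff f x u.
Proof.
move=> H; split; first by case: H.
exists (fun=> x), (fun=> u); split => //.
- by move=> e e0; exists 0%N => k _; rewrite subrr enorm0.
- by move=> e e0; exists 0%N => k _; rewrite subrr enorm0.
- by move=> e e0; exists 0%N => k _; rewrite subrr normr0.
Qed.


Lemma le0_of_small (a b : R) : (forall t, 0 < t -> t <= 1 -> a <= t * b) -> a <= 0.
Proof.
move=> H; rewrite leNgt; apply/negP => a0.
case: (lerP b 0) => b0.
  by have := H 1 ltr01 (lexx _); rewrite mul1r => h; lra.
have ab0 : 0 < a + b by lra.
have ht : a / (a + b) * (a + b) = a by rewrite divfK ?gt_eqF.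
have t0 : 0 < a / (a + b) by rewrite divr_gt0.
have t1 : a / (a + b) <= 1 by rewrite ler_pdivrMr // mul1r; lra.
have := H _ t0 t1; move: (a / (a + b)) ht t0 => t ht t0 h.
nra.
Qed.

Lemma glob f y (l : V) (K : V -> R) : convex_fun f -> (forall x, f x != -oo%E) ->
  f y \is a fin_num ->
  (forall x t, 0 < t -> t <= 1 ->
     (f y <= f (t *: x + (1 - t) *: y)%R + (t * dot l (x - y) + t ^+ 2 * K x)%:E)%E) ->
  forall x, ((fine (f y) - dot l (x - y))%:E <= f x)%E.
Proof.
move=> cf nf fy H x.
move: (nf x); case fxE: (f x) => [r||] // _; last by rewrite leey.
rewrite lee_fin -subr_le0.
set L := dot l (x - y); set fy' := fine (f y).
apply: (@le0_of_small _ (K x)) => t t0 t1.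
have h1 := cf x y t (ltW t0) t1.
rewrite fxE -(fineK fy) -/fy' -!EFinM -EFinD in h1.
have h2 := H x t t0 t1.
have := le_trans h2 (leeD h1 (lexx (t * L + t ^+ 2 * K x)%:E)).
rewrite -(fineK fy) -/fy' -EFinD lee_fin => h3.
have : t * (fy' - L - r) <= t * (t * K x) by nra.
by rewrite ler_pM2l.
Qed.


Lemma shift2 (A B : \bar R) (p q u v : R) : A != -oo%E ->
  (A + p%:E <= B + q%:E)%E -> q - p = v - u -> (A + u%:E <= B + v%:E)%E.
Proof.
case: A => [a||] //= _; case: B => [b||] //=.
- by rewrite -!EFinD !lee_fin => h1 h2; lra.
- by move=> _ _; rewrite leey.
Qed.

Lemma moreau_le f mu w x :
  (moreau f mu w <= f x + ((2 * mu)^-1 * enorm (x - w) ^+ 2)%:E)%E.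
Proof. by apply: ge_ereal_inf; exists (f x + ((2 * mu)^-1 * enorm (x - w) ^+ 2)%:E)%E => //; exists x. Qed.

Lemma moreau_ge f mu w (K : R) :
  (forall x, (K%:E <= f x + ((2 * mu)^-1 * enorm (x - w) ^+ 2)%:E)%E) ->
  (K%:E <= moreau f mu w)%E.
Proof. by move=> H; apply/ereal_infP => _ [x _ <-]. Qed.

Lemma moreau_prox f mu z x : f x \is a fin_num -> is_prox f mu z x ->
  moreau f mu z = (fine (f x) + (2 * mu)^-1 * enorm (x - z) ^+ 2)%:E.
Proof.
move=> fx px; apply/le_anti/andP; split.
  by rewrite EFinD fineK // moreau_le.
by rewrite EFinD fineK //; apply/ereal_infP => _ [y _ <-]; exact: px.
Qed.

Lemma quad_lb (al : R) (P dd : V) : 0 < al ->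
  - (dot P P * (4 * al)^-1) <= al * dot dd dd + dot P dd.
Proof.
move=> al0.
have := dot_ge0 ((2 * al) *: dd + P).
rewrite dotDD !dotZl dotZr (dotC dd P).
have i0 : 0 < (4 * al)^-1 by rewrite invr_gt0 mulr_gt0.
move=> h; have := mulr_ge0 (ltW i0) h.
have -> : (4 * al)^-1 * (2 * al * (2 * al * dot dd dd) + 2 * (2 * al * dot P dd) + dot P P)
  = al * dot dd dd + dot P dd + dot P P * (4 * al)^-1.
  by field; rewrite gt_eqF.
lra.
Qed.


Lemma shift1 (A B : \bar R) (p q v : R) : A != -oo%E ->
  (A + p%:E <= B + q%:E)%E -> q - p = v -> (A <= B + v%:E)%E.
Proof.
case: A => [a||] //= _; case: B => [b||] //=.
- by rewrite -!EFinD !lee_fin => h1 h2; lra.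
- by move=> _ _; rewrite leey.
Qed.

Lemma fin_between (K U : R) (M : \bar R) : (K%:E <= M)%E -> (M <= U%:E)%E ->
  [/\ M \is a fin_num, fine M <= U & K <= fine M].
Proof. by case: M => [m||] //=; rewrite !lee_fin. Qed.

End M.

Ltac dexp := rewrite ?(dotDl, dotDr, dotNl, dotNr, dotZl, dotZr, enorm_sq).

Unset Implicit Arguments. Set Strict Implicit.

Theorem proposition2p1 (R : realType) (n : nat)
    (phi g : 'rV[R]_n -> \bar R) (m_phi mu eps : R) (zbar xbar ybar d : 'rV[R]_n) :
  0 <= m_phi ->
  proper_fun phi -> lsc_fun phi -> weakly_convex m_phi phi ->
  proper_fun g -> lsc_fun g -> convex_fun g ->
  0 < eps -> 0 < mu -> mu * m_phi < 1 ->
  has_gradient (psi_mu phi g mu) zbar d ->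
  enorm d <= Num.min 1 mu^-1 * eps ->
  is_prox phi mu zbar xbar ->
  is_prox g mu zbar ybar ->
  exists u a b : 'rV[R]_n,
    [/\ lim_subdiff phi xbar a, lim_subdiff g ybar b, u = a - b &
        Num.max (enorm u) (enorm (xbar - ybar)) <= eps].
Proof.
move=> m0 pphi lphi wphi pg lg cg eps0 mu0 mum grad hd pxphi pxg.
have c0 : 0 < (2 * mu)^-1 by rewrite invr_gt0 mulr_gt0.
have hc : mu^-1 = 2 * (2 * mu)^-1 by rewrite invfM mulrA divff ?mul1r // pnatr_eq0.
have hc2 : (2 * mu)^-1 * (2 * mu) = 1 by rewrite mulVf // gt_eqF // mulr_gt0.
set c := (2 * mu)^-1 in c0 hc hc2 *.
have fx := prox_fin pphi pxphi.
have gy := prox_fin pg pxg.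
set fx' := fine (phi xbar).
set gy' := fine (g ybar).
have gglob : forall x, ((gy' - dot (mu^-1 *: (ybar - zbar)) (x - ybar))%:E <= g x)%E.
  apply: (@glob _ _ _ _ _ (fun x => c * dot (x - ybar) (x - ybar))) => //; first exact: pg.1.
  move=> x t t0 t1.
  apply: (shift1 (pg.1 ybar) (pxg (t *: x + (1 - t) *: ybar))).
  rewrite hc; dexp; rewrite -/c ?(dotC ybar x) ?(dotC zbar x) ?(dotC zbar ybar); ring.
pose F := fun x => (phi x + ((m_phi / 2) * enorm x ^+ 2)%:E)%E.
have Ffin : F xbar \is a fin_num by rewrite fin_numD fx.
have Fnf : forall x, F x != -oo%E.
  by move=> x; rewrite /F; move: (pphi.1 x); case: (phi x).
have hF : fine (F xbar) = fx' + m_phi / 2 * enorm xbar ^+ 2.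
  by rewrite /F -(fineK fx) -EFinD.
pose l := mu^-1 *: (xbar - zbar) - m_phi *: xbar.
have pglob0 : forall x, ((fine (F xbar) - dot l (x - xbar))%:E <= F x)%E.
  apply: (@glob _ _ _ _ _ (fun x => (c - m_phi / 2) * dot (x - xbar) (x - xbar))) => //.
  move=> x t t0 t1.
  rewrite /F -addeA -EFinD.
  apply: (shift2 (pphi.1 xbar) (pxphi (t *: x + (1 - t) *: xbar))).
  rewrite /l hc; dexp; rewrite -/c ?(dotC xbar x) ?(dotC zbar x) ?(dotC zbar xbar); by field.
have pglob : forall x, ((fx' + m_phi / 2 * dot xbar xbar - dot l (x - xbar) - m_phi / 2 * dot x x)%:E <= phi x)%E.
  move=> x; have := pglob0 x; rewrite hF /F -!enorm_sq.
  by move/(lee_sub_fin (pphi.1 x)).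
have al0 : 0 < c - m_phi / 2 by nra.
set al := c - m_phi / 2 in al0.
have phiM : forall w, [/\ moreau phi mu w \is a fin_num,
    fine (moreau phi mu w) <= fx' + c * dot (xbar - w) (xbar - w) & True].
  move=> w.
  pose P := - l - m_phi *: xbar + (2 * c) *: (xbar - w).
  have HL : ((fx' + c * dot (xbar - w) (xbar - w) - dot P P * (4 * al)^-1)%:E
     <= moreau phi mu w)%E.
    apply: moreau_ge => x.
    apply: le_trans (leeD (pglob x) (lexx _)).
    rewrite -EFinD lee_fin.
    have := quad_lb P (x - xbar) al0.
    have -> : fx' + m_phi / 2 * dot xbar xbar - dot l (x - xbar) - m_phi / 2 * dot x x +
      c * enorm (x - w) ^+ 2 = fx' + c * dot (xbar - w) (xbar - w) +
      (al * dot (x - xbar) (x - xbar) + dot P (x - xbar)).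
      rewrite /P /l /al hc; dexp; rewrite -/c.
      rewrite ?(dotC xbar x) ?(dotC zbar x) ?(dotC zbar xbar) ?(dotC w x) ?(dotC w xbar).
      by field.
    lra.
  have HU : (moreau phi mu w <= (fx' + c * dot (xbar - w) (xbar - w))%:E)%E.
    by rewrite (le_trans (moreau_le _ _ _ xbar)) // -(fineK fx) -EFinD enorm_sq.
  by have [h1 h2 _] := fin_between HL HU.
set a := mu^-1 *: (zbar - xbar).
set b := mu^-1 *: (zbar - ybar).
have gM : forall w, [/\ moreau g mu w \is a fin_num, True &
    gy' + c * dot (ybar - zbar) (ybar - zbar) + dot b (w - zbar) <= fine (moreau g mu w)].
  move=> w.
  have HL : ((gy' + c * dot (ybar - zbar) (ybar - zbar) + dot b (w - zbar))%:E
     <= moreau g mu w)%E.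
    apply: moreau_ge => x.
    apply: le_trans (leeD (gglob x) (lexx _)).
    rewrite -EFinD lee_fin.
    have := mulr_ge0 (ltW c0) (dot_ge0 (x - w + (zbar - ybar))).
    have -> : gy' - dot (mu^-1 *: (ybar - zbar)) (x - ybar) + c * enorm (x - w) ^+ 2
      = gy' + c * dot (ybar - zbar) (ybar - zbar) + dot b (w - zbar)
        + c * dot (x - w + (zbar - ybar)) (x - w + (zbar - ybar)).
      rewrite /b hc; dexp; rewrite -/c.
      rewrite ?(dotC ybar x) ?(dotC zbar x) ?(dotC zbar ybar) ?(dotC w x) ?(dotC w ybar)
        ?(dotC zbar w).
      by field.
    lra.
  have HU : (moreau g mu w <= (gy' + c * dot (ybar - w) (ybar - w))%:E)%E.
    by rewrite (le_trans (moreau_le _ _ _ ybar)) // -(fineK gy) -EFinD enorm_sq.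
  by have [h1 _ h3] := fin_between HL HU.
have psiz : psi_mu phi g mu zbar = fx' + c * dot (xbar - zbar) (xbar - zbar)
    - (gy' + c * dot (ybar - zbar) (ybar - zbar)).
  by rewrite /psi_mu (moreau_prox fx pxphi) (moreau_prox gy pxg) /= !enorm_sq.
have psiw : forall w, psi_mu phi g mu w - psi_mu phi g mu zbar <=
    dot (a - b) (w - zbar) + c * dot (w - zbar) (w - zbar).
  move=> w; have [_ h1 _] := phiM w; have [_ _ h2] := gM w.
  rewrite psiz {1}/psi_mu.
  have : c * dot (xbar - w) (xbar - w) - c * dot (xbar - zbar) (xbar - zbar) - dot b (w - zbar)
    = dot (a - b) (w - zbar) + c * dot (w - zbar) (w - zbar).
    rewrite /a /b hc; dexp; rewrite -/c.
    rewrite ?(dotC zbar xbar) ?(dotC w xbar) ?(dotC zbar w) ?(dotC zbar ybar) ?(dotC w ybar).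
    by field.
  lra.
have dE : d = a - b.
  apply/eqP; rewrite -subr_eq0; apply/eqP.
  set v := d - (a - b).
  apply: dot_eq0; apply/eqP; apply: contraT => vne.
  have vv0 : 0 < dot v v by rewrite lt_def vne dot_ge0.
  have nu0 : 0 < enorm v by rewrite /enorm sqrtr_gt0.
  have nuv : dot v v = enorm v ^+ 2 by rewrite enorm_sq.
  set nu := enorm v in nu0 nuv.
  have [del del0 Hdel] := grad (nu / 4) ltac:(by rewrite divr_gt0).
  set t0 := del / (2 * nu).
  set t1 := (4 * c)^-1.
  have t00 : 0 < t0 by rewrite divr_gt0 // mulr_gt0.
  have t10 : 0 < t1 by rewrite invr_gt0 mulr_gt0.
  have ht0 : t0 * nu = del / 2 by rewrite /t0; field; rewrite gt_eqF.
  have ht1 : c * t1 = 1 / 4 by rewrite /t1; field; rewrite gt_eqF.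
  set t := Num.min t0 t1.
  have tt0 : t <= t0 by rewrite ge_min lexx.
  have tt1 : t <= t1 by rewrite ge_min lexx orbT.
  have t0' : 0 < t by rewrite lt_min t00 t10.
  have hw : zbar + t *: v - zbar = t *: v by rewrite addrC addKr.
  have hn : enorm (zbar + t *: v - zbar) = t * nu.
    by rewrite hw enormZ ger0_norm // ltW.
  have hlt : enorm (zbar + t *: v - zbar) < del.
    rewrite hn; have : t * nu <= t0 * nu by rewrite ler_pM2r.
    lra.
  have h1 := Hdel _ hlt.
  have h2 := psiw (zbar + t *: v).
  move: h1 h2; rewrite hn hw => h1 h2.
  have : dot v (t *: v) <= nu / 4 * (t * nu) + c * dot (t *: v) (t *: v).
    rewrite /v dotBl; move: (ler_normlW h1) => h4.
    have h5 : - (psi_mu phi g mu (zbar + t *: v) - psi_mu phi g mu zbar - dot d (t *: v))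
      <= nu / 4 * (t * nu) by rewrite -normrN in h1; exact: (le_trans (ler_norm _) h1).
    lra.
  rewrite dotZl !dotZr nuv => h6.
  have h7 : c * t <= 1 / 4 by rewrite -ht1 ler_pM2l.
  have h7' : 0 <= 1 / 4 - c * t by lra.
  have h8 := mulr_ge0 (ltW (mulr_gt0 t0' (exprn_gt0 2 nu0))) h7'.
  nra.
exists d, a, b; split.
- exact: lim_of_reg (reg_sub_prox mu0 pphi pxphi).
- exact: lim_of_reg (reg_sub_prox mu0 pg pxg).
- exact: dE.
have hxy : xbar - ybar = (- mu) *: d.
  rewrite dE /a /b -scalerBr scalerA mulNr mulfV ?gt_eqF // scaleN1r.
  have -> : zbar - xbar - (zbar - ybar) = ybar - xbar.
    by rewrite opprB addrC addrA subrK.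
  by rewrite opprB.
have nd0 := enorm_ge0 d.
have hm1 : Num.min 1 mu^-1 <= 1 by rewrite ge_min lexx.
have hm2 : Num.min 1 mu^-1 <= mu^-1 by rewrite ge_min lexx orbT.
have hmu : mu * mu^-1 = 1 by rewrite mulfV // gt_eqF.
rewrite ge_max hxy enormZ normrN ger0_norm ?(ltW mu0) //; apply/andP; split.
  by rewrite (le_trans hd) // -[leRHS]mul1r ler_pM2r.
have : enorm d <= mu^-1 * eps by rewrite (le_trans hd) // ler_pM2r.
move=> h; have := ler_wpM2l (ltW mu0) h; rewrite mulrA hmu mul1r.
done.
Qed.
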